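(* Let $Q$ be a countable dense subset of $2^\omega$. Let $T$ be a $G_\delta$ subset of $2^\omega\times2^\omega$ with $Q^2\subseteq T$, and let $g:T\to T$ be a homeomorphism such that $\pi_0\restriction g[Q^2]$ is injective. Let $h:2^\omega\to2^\omega$ be a homeomorphism and $i\in\{0,1\}$. Then the set $$C=\{(x,y)\in T: h(\pi_i(x,y))=\pi_0(g(x,y))\}$$ is closed and nowhere dense in $T$.
   Context: $\pi_0,\pi_1:2^\omega\times2^\omega\to2^\omega$ are the projections onto the first and second coordinate, respectively. $2^\omega$ is the Cantor set. *)

(* Defs.v *)
From Stdlib Require Import Arith.

Definition Cantor := nat -> bool.
Definition Cantor2 := (Cantor * Cantor)%type.

(* x and y agree on the first n coordinates (basic clopen neighbourhoods). *)
Definition agree (n : nat) (x y : Cantor) : Prop := forall k, k < n -> x k = y k.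
Definition near2 (n : nat) (p q : Cantor2) : Prop := agree n (fst p) (fst q) /\ agree n (snd p) (snd q).

(* projections pi_0, pi_1 ; false = 0, true = 1 *)
Definition proj (i : bool) (p : Cantor2) : Cantor := if i then snd p else fst p.

Definition open2 (U : Cantor2 -> Prop) : Prop :=
  forall p, U p -> exists n, forall q, near2 n p q -> U q.

Definition Gdelta2 (T : Cantor2 -> Prop) : Prop :=
  exists U : nat -> Cantor2 -> Prop, (forall k, open2 (U k)) /\
    (forall p, T p <-> forall k, U k p).

Definition countable (Q : Cantor -> Prop) : Prop :=
  exists f : Cantor -> nat, forall x y, Q x -> Q y -> f x = f y -> x = y.

Definition dense (Q : Cantor -> Prop) : Prop :=
  forall x n, exists q, Q q /\ agree n x q.

Definition continuous (h : Cantor -> Cantor) : Prop :=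
  forall x n, exists m, forall y, agree m x y -> agree n (h x) (h y).

Definition homeomorphism (h : Cantor -> Cantor) : Prop :=
  exists hinv : Cantor -> Cantor,
    (forall x, hinv (h x) = x) /\ (forall x, h (hinv x) = x) /\
    continuous h /\ continuous hinv.

Definition continuous_on (T : Cantor2 -> Prop) (g : Cantor2 -> Cantor2) : Prop :=
  forall p, T p -> forall n, exists m, forall q, T q -> near2 m p q -> near2 n (g p) (g q).

Definition homeomorphism_on (T : Cantor2 -> Prop) (g : Cantor2 -> Cantor2) : Prop :=
  exists ginv : Cantor2 -> Cantor2,
    (forall p, T p -> T (g p)) /\ (forall p, T p -> T (ginv p)) /\
    (forall p, T p -> ginv (g p) = p) /\ (forall p, T p -> g (ginv p) = p) /\
    continuous_on T g /\ continuous_on T ginv.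

Definition closed_in (T A : Cantor2 -> Prop) : Prop :=
  (forall p, A p -> T p) /\
  forall p, T p -> ~ A p -> exists n, forall q, T q -> near2 n p q -> ~ A q.

Definition closure_in (T A : Cantor2 -> Prop) (p : Cantor2) : Prop :=
  T p /\ forall n, exists q, T q /\ A q /\ near2 n p q.

Definition interior_in (T B : Cantor2 -> Prop) (p : Cantor2) : Prop :=
  T p /\ B p /\ exists n, forall q, T q -> near2 n p q -> B q.

Definition nowhere_dense_in (T A : Cantor2 -> Prop) : Prop :=
  (forall p, A p -> T p) /\ forall p, ~ interior_in T (closure_in T A) p.

(* Main.v *)
Require Import Defs.
From Stdlib Require Import Arith Lia Classical FunctionalExtensionality.

Lemma agree_mono n m x y : n <= m -> agree m x y -> agree n x y.
Proof. intros H A k Hk. apply A. lia. Qed.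

Lemma near2_mono n m p q : n <= m -> near2 m p q -> near2 n p q.
Proof. intros H [A B]. split; eapply agree_mono; eauto. Qed.

Lemma two_points (Q : Cantor -> Prop) : dense Q -> forall x n,
  exists b b', Q b /\ Q b' /\ agree n x b /\ agree n x b' /\ b <> b'.
Proof.
  intros D x n. destruct (D x n) as [b [Qb Ab]].
  set (x' := fun k => if k <? n then b k else negb (b n)).
  destruct (D x' (S n)) as [b' [Qb' Ab']].
  exists b, b'. repeat split; auto.
  - intros k Hk. rewrite (Ab k Hk). rewrite <- (Ab' k ltac:(lia)).
    unfold x'. destruct (Nat.ltb_spec k n); [reflexivity|lia].
  - intros E. assert (Hn := Ab' n ltac:(lia)). unfold x' in Hn.
    rewrite Nat.ltb_irrefl in Hn. rewrite <- E in Hn. destruct (b n); discriminate.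
Qed.

Theorem mainTheorem6
  (Q : Cantor -> Prop) (T : Cantor2 -> Prop) (g : Cantor2 -> Cantor2)
  (h : Cantor -> Cantor) (i : bool) :
  countable Q -> dense Q ->
  Gdelta2 T ->
  (forall a b, Q a -> Q b -> T (a, b)) ->
  homeomorphism_on T g ->
  (forall a b c d, Q a -> Q b -> Q c -> Q d ->
     fst (g (a, b)) = fst (g (c, d)) -> g (a, b) = g (c, d)) ->
  homeomorphism h ->
  let C := fun p : Cantor2 => T p /\ h (proj i p) = fst (g p) in
  closed_in T C /\ nowhere_dense_in T C.
Proof.
  intros _ D _ QT [ginv [gT [giT [gK [giK [gc gic]]]]]] Inj [hinv [_ [_ [hc _]]]] C.
  assert (Cl : closed_in T C).
  { split. { intros p [Tp _]; exact Tp. }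
    intros p Tp NC.
    assert (Hne : h (proj i p) <> fst (g p)) by (intro E; apply NC; split; auto).
    assert (Hk : exists k, h (proj i p) k <> fst (g p) k).
    { apply not_all_ex_not. intro A. apply Hne. apply functional_extensionality. exact A. }
    destruct Hk as [k Hk].
    destruct (hc (proj i p) (S k)) as [m1 Hm1].
    destruct (gc p Tp (S k)) as [m2 Hm2].
    exists (Nat.max m1 m2). intros q Tq Nq [_ Cq].
    assert (N1 : near2 m1 p q) by (eapply near2_mono; [|exact Nq]; lia).
    assert (N2 : near2 m2 p q) by (eapply near2_mono; [|exact Nq]; lia).
    assert (E1 : h (proj i p) k = h (proj i q) k).
    { apply Hm1; [|lia]. destruct N1 as [A B]. destruct i; simpl; auto. }
    assert (E2 : fst (g p) k = fst (g q) k).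
    { destruct (Hm2 q Tq N2) as [A _]. apply A. lia. }
    apply Hk. rewrite E1, E2, Cq. reflexivity. }
  split; [exact Cl|]. split. { intros p [Tp _]; exact Tp. }
  intros p [Tp [_ [n Hn]]].
  assert (InC : forall a b, Q a -> Q b -> agree n (fst p) a -> agree n (snd p) b -> C (a, b)).
  { intros a b Qa Qb Aa Ab.
    assert (Cla : closure_in T C (a, b)) by (apply Hn; [apply QT; auto| split; auto]).
    apply NNPP. intro NC. destruct Cl as [_ Cl2].
    destruct (Cl2 (a, b) (QT a b Qa Qb) NC) as [m Hm].
    destruct Cla as [_ Cla]. destruct (Cla m) as [q [Tq [Cq Nq]]].
    exact (Hm q Tq Nq Cq). }
  assert (gInj : forall u v, T u -> T v -> g u = g v -> u = v).
  { intros u v Tu Tv E. rewrite <- (gK u Tu), <- (gK v Tv), E. reflexivity. }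
  destruct (D (fst p) n) as [a [Qa Aa]].
  destruct (two_points Q D (snd p) n) as [b [b' [Qb [Qb' [Ab [Ab' Nb]]]]]].
  destruct (D (snd p) n) as [c [Qc Ac]].
  destruct (two_points Q D (fst p) n) as [a1 [a1' [Qa1 [Qa1' [Aa1 [Aa1' Na1]]]]]].
  destruct i.
  -
    destruct (InC a1 c Qa1 Qc Aa1 Ac) as [_ E1].
    destruct (InC a1' c Qa1' Qc Aa1' Ac) as [_ E2]. simpl in E1, E2.
    assert (G : g (a1, c) = g (a1', c)) by (apply Inj; auto; congruence).
    apply gInj in G; try (apply QT; auto). congruence.
  - destruct (InC a b Qa Qb Aa Ab) as [_ E1].
    destruct (InC a b' Qa Qb' Aa Ab') as [_ E2]. simpl in E1, E2.
    assert (G : g (a, b) = g (a, b')) by (apply Inj; auto; congruence).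
    apply gInj in G; try (apply QT; auto). congruence.
Qed.
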